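(* Let $G$ be a global type. The language of the LTS $\mathrm{cat}(G)$ coincides with the language of the LTS on global types, with initial state $G$, whose transitions are those derivable using only the rules [Choice] and [Rec].
   Context: Fix disjoint sets $\mathfrak{P}$ (participants) and $\mathcal{M}$ (messages); interactions are $\mathsf{p}\to\mathsf{q}:\mathsf{m}$ with $\mathsf{p}\neq\mathsf{q}\in\mathfrak{P}$, $\mathsf{m}\in\mathcal{M}$, forming the set $\mathcal{L}_{int}$; $\mathrm{ptp}(\mathsf{p}\to\mathsf{q}:\mathsf{m})=\{\mathsf{p},\mathsf{q}\}$. Global types: $G ::= \mathbf{end} \mid \mu\mathbf{r}.G \mid \mathbf{r} \mid \sum_{i\in I}\mathsf{p}\to\mathsf{q}_i:\mathsf{m}_i;G_i$ (written $\mathsf{p}\to\mathsf{q}:\mathsf{m};G$ when $|I|=1$); $\mu\mathbf{r}$ binds $\mathbf{r}$, occurrences of recursion variables are guarded, and bound variable names are all distinct and distinct from free ones. Operational semantics (LTS with labels in $\mathcal{L}_{int}$): [Choice] $\sum_{i\in I}\mathsf{p}\to\mathsf{q}_i:\mathsf{m}_i;G_i\xrightarrow{\mathsf{p}\to\mathsf{q}_j:\mathsf{m}_j}G_j$ for $j\in I$; [Rec] if $G[\mu\mathbf{r}.G/\mathbf{r}]\xrightarrow{\alpha}G'$ then $\mu\mathbf{r}.G\xrightarrow{\alpha}G'$; [Pass] if $G_j\xrightarrow{\alpha}G'_j$ and $\mathsf{p},\mathsf{q}_j\notin\mathrm{ptp}(\alpha)$ for all $j\in I$, then $\sum_{i\in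 I}\mathsf{p}\to\mathsf{q}_i:\mathsf{m}_i;G_i\xrightarrow{\alpha}\sum_{i\in I}\mathsf{p}\to\mathsf{q}_i:\mathsf{m}_i;G'_i$. $\mathrm{cat}(G)$ is the LTS with the subterms of $G$ as states, initial state $G$, labels $\mathcal{L}_{int}$, and transitions $\mathrm{catr}(G)$, where $\mathrm{catr}(\mathbf{end})=\mathrm{catr}(\mathbf{r})=\emptyset$, $\mathrm{catr}(\mu\mathbf{r}.G)=\mathrm{catr}(G)\cup\{\mathbf{r}\xrightarrow{\varepsilon}\mu\mathbf{r}.G,\ \mu\mathbf{r}.G\xrightarrow{\varepsilon}G\}$, and $\mathrm{catr}(\sum_{i\in I}\mathsf{p}\to\mathsf{q}_i:\mathsf{m}_i;G_i)=\bigcup_{j\in I}(\{\sum_{i\in I}\mathsf{p}\to\mathsf{q}_i:\mathsf{m}_i;G_i\xrightarrow{\mathsf{p}\to\mathsf{q}_j:\mathsf{m}_j}G_j\}\cup\mathrm{catr}(G_j))$. The language of an LTS is the set of traces (concatenations of labels, $\varepsilon$ being the identity) of its finite or infinite runs from the initial state. *)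

(* Defs.v *)
From Stdlib Require Import List Arith.
Import ListNotations.

Set Implicit Arguments.

(* A (finite or infinite) word over L: a finite word of length n is
   represented by w with w k = Some _ for k < n and w k = None for k >= n. *)
Definition word (L : Type) := nat -> option L.

Section Languages.
Variables (St L : Type).
Variable step : St -> option L -> St -> Prop.   (* None = epsilon *)

Inductive frun : St -> list (option L) -> Prop :=
| frun_nil  : forall s, frun s []
| frun_cons : forall s a s' ls, step s a s' -> frun s' ls -> frun s (a :: ls).

Fixpoint somes (ls : list (option L)) : list L :=
  match ls with
  | [] => []
  | None :: ls' => somes ls'
  | Some x :: ls' => x :: somes ls'
  end.

Fixpoint count_some (a : nat -> option L) (n : nat) : nat :=
  match n with
  | 0 => 0
  | S n' => count_some a n' + (match a n' with Some _ => 1 | None => 0 end)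
  end.

(* w is the concatenation of the labels of the infinite label sequence a *)
Definition inf_trace (a : nat -> option L) (w : word L) : Prop :=
  forall k x, w k = Some x <-> exists n, a n = Some x /\ count_some a n = k.

Definition lts_lang (init : St) (w : word L) : Prop :=
  (exists ls, frun init ls /\ forall k, w k = nth_error (somes ls) k)
  \/
  (exists (s : nat -> St) (a : nat -> option L),
      s 0 = init /\ (forall n, step (s n) (a n) (s (S n))) /\ inf_trace a w).

End Languages.

Section GlobalTypes.
Variables (P M : Type).   (* participants, messages *)

Inductive gtype : Type :=
| GEnd : gtype
| GVar : nat -> gtype
| GRec : nat -> gtype -> gtype
(* GChoice p [(q_i, m_i, G_i)]_i  =  sum_i p -> q_i : m_i ; G_i *)
| GChoice : P -> list (P * M * gtype) -> gtype.

Definition interaction := (P * P * M)%type.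

(* G[N/r] (naive substitution; capture cannot arise under the standing
   convention that bound names are distinct from each other and from free ones) *)
Fixpoint subst (r : nat) (N : gtype) (G : gtype) : gtype :=
  match G with
  | GEnd => GEnd
  | GVar s => if Nat.eqb s r then N else GVar s
  | GRec s B => if Nat.eqb s r then GRec s B else GRec s (subst r N B)
  | GChoice p bs =>
      GChoice p ((fix substs (bs : list (P * M * gtype)) :=
                    match bs with
                    | [] => []
                    | (q, m, G') :: bs' => (q, m, subst r N G') :: substs bs'
                    end) bs)
  end.

(* bound variables, with multiplicity *)
Fixpoint bv (G : gtype) : list nat :=
  match G with
  | GEnd => []
  | GVar _ => []
  | GRec r B => r :: bv B
  | GChoice _ bs =>
      (fix bvs (bs : list (P * M * gtype)) :=
         match bs with
         | [] => []
         | (_, _, G') :: bs' => bv G' ++ bvs bs'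
         end) bs
  end.

Fixpoint fv (G : gtype) : list nat :=
  match G with
  | GEnd => []
  | GVar r => [r]
  | GRec r B => filter (fun s => negb (Nat.eqb s r)) (fv B)
  | GChoice _ bs =>
      (fix fvs (bs : list (P * M * gtype)) :=
         match bs with
         | [] => []
         | (_, _, G') :: bs' => fv G' ++ fvs bs'
         end) bs
  end.

Inductive subterm : gtype -> gtype -> Prop :=
| sub_refl : forall G, subterm G G
| sub_rec : forall G r B, subterm G B -> subterm G (GRec r B)
| sub_choice : forall G p bs q m G',
    In (q, m, G') bs -> subterm G G' -> subterm G (GChoice p bs).

Fixpoint unguarded_occ (r : nat) (G : gtype) : Prop :=
  match G with
  | GVar s => s = r
  | GRec s B => s <> r /\ unguarded_occ r B
  | _ => False
  end.

(* Standing assumptions on global types: choices have a nonempty index set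
   and p <> q_i (so labels are interactions); occurrences of recursion
   variables are guarded; bound variable names are all distinct and
   distinct from free ones. *)
Definition wf_gtype (G : gtype) : Prop :=
  (forall T, subterm T G ->
     (forall p bs, T = GChoice p bs ->
        bs <> [] /\ forall q m G', In (q, m, G') bs -> p <> q) /\
     (forall r B, T = GRec r B -> ~ unguarded_occ r B))
  /\ NoDup (bv G)
  /\ (forall r, In r (bv G) -> ~ In r (fv G)).

Inductive sem_CR : gtype -> interaction -> gtype -> Prop :=
| CR_choice : forall p bs q m Gj,
    In (q, m, Gj) bs -> sem_CR (GChoice p bs) (p, q, m) Gj
| CR_rec : forall r B a G',
    sem_CR (subst r (GRec r B) B) a G' -> sem_CR (GRec r B) a G'.

Definition sem_CR_step (G : gtype) (l : option interaction) (G' : gtype) : Prop :=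
  match l with
  | Some a => sem_CR G a G'
  | None => False
  end.

Inductive catr : gtype -> gtype -> option interaction -> gtype -> Prop :=
| catr_recin : forall r B s l t, catr B s l t -> catr (GRec r B) s l t
| catr_back : forall r B, catr (GRec r B) (GVar r) None (GRec r B)
| catr_unfold : forall r B, catr (GRec r B) (GRec r B) None B
| catr_choice : forall p bs q m Gj,
    In (q, m, Gj) bs -> catr (GChoice p bs) (GChoice p bs) (Some (p, q, m)) Gj
| catr_choicein : forall p bs q m Gj s l t,
    In (q, m, Gj) bs -> catr Gj s l t -> catr (GChoice p bs) s l t.

Definition cat_step (G : gtype) (s : gtype) (l : option interaction) (t : gtype) : Prop :=
  subterm s G /\ subterm t G /\ catr G s l t.

End GlobalTypes.

Arguments GEnd {P M}.
Arguments GVar {P M} _.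

(* Main.v *)
Require Import Defs.
From Stdlib Require Import List Arith Lia Classical ClassicalEpsilon.
Import ListNotations.

Section Generic.
Variable L : Type.

Lemma somes_app (l1 l2 : list (option L)) : somes (l1 ++ l2) = somes l1 ++ somes l2.
Proof. induction l1 as [|[x|] l1 IH]; simpl; rewrite ?IH; auto. Qed.

Lemma count_somes_len (a : nat -> option L) n :
  count_some a n = length (somes (map a (seq 0 n))).
Proof.
  induction n; [reflexivity|]. cbn [count_some].
  rewrite seq_S, map_app, somes_app, length_app, IHn. simpl.
  destruct (a n); simpl; auto.
Qed.

Lemma nth_somes_prefix (a : nat -> option L) N k x :
  nth_error (somes (map a (seq 0 N))) k = Some x <->
  exists n, n < N /\ a n = Some x /\ count_some a n = k.
Proof.
  induction N.
  - simpl. destruct k; split; try discriminate; intros (n & H & _); lia.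
  - rewrite seq_S, map_app, somes_app. cbn [count_some].
    destruct (Nat.lt_ge_cases k (length (somes (map a (seq 0 N))))) as [Hk|Hk].
    + rewrite nth_error_app1 by auto. rewrite IHN. split.
      * intros (n & H1 & H2 & H3). exists n; repeat split; auto; lia.
      * intros (n & H1 & H2 & H3). exists n. repeat split; auto.
        destruct (Nat.eq_dec n N); [|lia]. subst n.
        rewrite <- count_somes_len in Hk. lia.
    + rewrite nth_error_app2 by auto. rewrite <- count_somes_len in *. split.
      * simpl. destruct (a N) eqn:E; simpl.
        -- destruct (k - count_some a N) eqn:E2; simpl; intros H.
           ++ inversion H; subst. exists N. split; [lia|]. split; [auto|]. lia.
           ++ destruct n; discriminate.
        -- destruct (k - count_some a N); discriminate.
      * intros (n & H1 & H2 & H3).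
        destruct (Nat.eq_dec n N).
        -- subst n. simpl. rewrite H2. simpl. replace (k - count_some a N) with 0 by lia. reflexivity.
        -- exfalso.
           assert (Hm : forall m, n < m -> count_some a n < count_some a m).
           { induction m; intros Hm; [lia|]. simpl.
             destruct (Nat.eq_dec n m). subst. rewrite H2. lia.
             specialize (IHm ltac:(lia)). lia. }
           specialize (Hm N ltac:(lia)). lia.
Qed.

Lemma opt_eq_iff (o1 o2 : option L) : (forall x, o1 = Some x <-> o2 = Some x) -> o1 = o2.
Proof.
  intros H. destruct o1 as [x|], o2 as [y|]; auto.
  - apply H; auto.
  - symmetry; apply H; auto.
  - apply H; auto.
Qed.

Lemma fin_word (a : nat -> option L) w N :
  inf_trace a w -> (forall n, N <= n -> a n = None) ->
  forall k, w k = nth_error (somes (map a (seq 0 N))) k.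
Proof.
  intros Htr HN k. apply opt_eq_iff. intros x.
  split.
  - intros H. apply Htr in H. destruct H as (n & H1 & H2). apply nth_somes_prefix.
    exists n. repeat split; auto.
    destruct (Nat.lt_ge_cases n N); auto. rewrite HN in H1 by auto. discriminate.
  - intros H. apply nth_somes_prefix in H. destruct H as (n & _ & H). apply Htr. eauto.
Qed.

Lemma count_const (a : nat -> option L) m n :
  m <= n -> (forall i, m <= i -> i < n -> a i = None) -> count_some a n = count_some a m.
Proof.
  induction n; intros H1 H2.
  - f_equal; lia.
  - destruct (Nat.eq_dec m (S n)). subst; auto.
    simpl. rewrite H2 by lia. rewrite IHn; [lia|lia|].
    intros; apply H2; lia.
Qed.

Lemma count_all (a : nat -> option L) : (forall n, a n <> None) -> forall n, count_some a n = n.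
Proof.
  intros H n. induction n; simpl; auto. destruct (a n) eqn:E. lia. exfalso; eapply H; eauto.
Qed.

Lemma all_some_word (a : nat -> option L) w : (forall n, a n <> None) -> inf_trace a w ->
  forall k, w k = a k.
Proof.
  intros H Htr k. unfold inf_trace in Htr. apply opt_eq_iff. intros x. rewrite Htr. split.
  - intros (n & H1 & H2). rewrite count_all in H2 by auto. subst; auto.
  - intros H1. exists k. rewrite count_all by auto. auto.
Qed.

Lemma first_some (a : nat -> option L) d m :
  (exists n, m <= n <= m + d /\ a n <> None) ->
  exists n, m <= n /\ a n <> None /\ forall i, m <= i -> i < n -> a i = None.
Proof.
  revert m. induction d; intros m (n & H1 & H2).
  - exists n. split; [lia|]. split; [auto|]. intros; lia.
  - destruct (a m) eqn:E.
    + exists m. split; [lia|]. split; [rewrite E; discriminate|]. intros; lia.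
    + destruct (IHd (S m)) as (k & K1 & K2 & K3).
      { exists n. split; [|auto]. destruct (Nat.eq_dec n m). subst; congruence. lia. }
      exists k. split; [lia|]. split; [auto|]. intros i I1 I2.
      destruct (Nat.eq_dec i m). subst; auto. apply K3; lia.
Qed.

Inductive epsn {St : Type} (step : St -> option L -> St -> Prop) : nat -> St -> St -> Prop :=
| epsn0 : forall s, epsn step 0 s s
| epsnS : forall n s s' t, step s None s' -> epsn step n s' t -> epsn step (S n) s t.

Lemma epsn_frun {St : Type} (step : St -> option L -> St -> Prop) n s t rest :
  epsn step n s t -> frun step t rest -> frun step s (repeat None n ++ rest).
Proof. induction 1; simpl; auto. intros; econstructor; eauto. Qed.

Lemma somes_repeat n (l : list (option L)) : somes (repeat None n ++ l) = somes l.
Proof. induction n; simpl; auto. Qed.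

Lemma frun_prefix {St : Type} (step : St -> option L -> St -> Prop) s a :
  (forall n, step (s n) (a n) (s (S n))) ->
  forall N i, frun step (s i) (map a (seq i N)).
Proof.
  intros H N. induction N; intros i; simpl; econstructor; eauto.
Qed.

Section A.
Variables (St1 St2 : Type).
Variable step1 : St1 -> option L -> St1 -> Prop.
Variable step2 : St2 -> option L -> St2 -> Prop.
Variable R : St1 -> St2 -> Prop.
Hypothesis HA : forall a b l a', R a b -> step1 a l a' ->
  (l = None /\ R a' b) \/ (exists x b', l = Some x /\ step2 b (Some x) b' /\ R a' b').

Lemma A_fin a ls : frun step1 a ls -> forall b, R a b ->
  exists ls', frun step2 b ls' /\ somes ls' = somes ls.
Proof.
  induction 1 as [s|s l s' ls Hs Hr IH]; intros b Hb.
  - exists []; split; auto; constructor.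
  - destruct (HA _ _ _ _ Hb Hs) as [[-> H]|(x & b' & -> & H1 & H2)].
    + destruct (IH _ H) as (ls' & ? & ?). exists ls'; split; auto.
    + destruct (IH _ H2) as (ls' & ? & ?). exists (Some x :: ls'); split.
      econstructor; eauto. simpl; congruence.
Qed.

Lemma A_lang a0 b0 w : R a0 b0 -> lts_lang step1 a0 w -> lts_lang step2 b0 w.
Proof.
  intros H0 [(ls & Hls & Hw)|(s & a & Hs0 & Hst & Htr)].
  - destruct (A_fin _ _ Hls _ H0) as (ls' & ? & E). left. exists ls'. split; auto.
    intros k; rewrite E; auto.
  - assert (Hch : forall n b, exists b', R (s n) b ->
       ((a n = None /\ b' = b) \/ (a n <> None /\ step2 b (a n) b')) /\ R (s (S n)) b').
    { intros n b. destruct (classic (R (s n) b)) as [Hr|Hr].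
      - destruct (HA _ _ _ _ Hr (Hst n)) as [[E H]|(x & b' & E & H1 & H2)].
        + exists b; auto.
        + exists b'. intros _. split; auto. right. rewrite E. split; auto. discriminate.
      - exists b. intros; contradiction. }
    set (F := fun n b => proj1_sig (constructive_indefinite_description _ (Hch n b))).
    assert (HF : forall n b, R (s n) b ->
       ((a n = None /\ F n b = b) \/ (a n <> None /\ step2 b (a n) (F n b))) /\ R (s (S n)) (F n b)).
    { intros n b. exact (proj2_sig (constructive_indefinite_description _ (Hch n b))). }
    clearbody F.
    set (g := fix g n := match n with 0 => b0 | S n => F n (g n) end).
    assert (Hg : forall n, R (s n) (g n)).
    { induction n; simpl. rewrite Hs0; auto. apply HF; auto. }
    assert (Hg2 : forall n, (a n = None /\ g (S n) = g n) \/ (a n <> None /\ step2 (g n) (a n) (g (S n)))).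
    { intros n. simpl. apply HF; auto. }
    assert (Hconst : forall m n, m <= n -> (forall i, m <= i -> i < n -> a i = None) -> g n = g m).
    { intros m n. induction n; intros H1 H2.
      - f_equal; lia.
      - destruct (Nat.eq_dec m (S n)). subst; auto.
        destruct (Hg2 n) as [[_ E]|[E _]].
        + rewrite E. apply IHn. lia. intros; apply H2; lia.
        + exfalso. apply E. apply H2; lia. }
    destruct (classic (exists N, forall n, N <= n -> a n = None)) as [(N & HN)|HN].
    + left. destruct (A_fin _ _ (frun_prefix _ _ _ Hst N 0) b0) as (ls' & ? & E).
      { rewrite Hs0; auto. }
      exists ls'. split; auto. intros k. rewrite E. apply fin_word; auto.
    + assert (Hinf : forall m, exists n, m <= n /\ a n <> None /\ forall i, m <= i -> i < n -> a i = None).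
      { intros m. destruct (classic (exists n, m <= n /\ a n <> None)) as [(n & H1 & H2)|H].
        - apply (first_some a (n - m)). exists n. split; auto. lia.
        - exfalso. apply HN. exists m. intros n Hn. destruct (a n) eqn:E; auto.
          exfalso. apply H. exists n. rewrite E. split; auto. discriminate. }
      set (nx := fun m => proj1_sig (constructive_indefinite_description _ (Hinf m))).
      assert (Hnx : forall m, m <= nx m /\ a (nx m) <> None /\ forall i, m <= i -> i < nx m -> a i = None).
      { intros m. exact (proj2_sig (constructive_indefinite_description _ (Hinf m))). }
      clearbody nx.
      assert (Hnx1 : forall m, m <= nx m) by (intros; apply Hnx).
      assert (Hnx2 : forall m, a (nx m) <> None) by (intros; apply Hnx).
      assert (Hnx3 : forall m i, m <= i -> i < nx m -> a i = None) by (intros; eapply Hnx; eauto).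
      clear Hnx.
      set (h := fix h j := match j with 0 => nx 0 | S j => nx (S (h j)) end).
      assert (Hh0 : h 0 = nx 0) by reflexivity.
      assert (HhS : forall j, h (S j) = nx (S (h j))) by reflexivity.
      clearbody h.
      assert (Hcnt : forall j, count_some a (h j) = j).
      { induction j.
        - rewrite Hh0. rewrite (count_const a 0 (nx 0)); eauto.
        - rewrite HhS. rewrite (count_const a (S (h j)) (nx (S (h j)))); [|eauto|eauto].
          simpl. destruct (a (h j)) eqn:E. lia.
          exfalso. destruct j. rewrite Hh0 in E. apply (Hnx2 0); auto.
          rewrite HhS in E. apply (Hnx2 (S (h j))); auto. }
      assert (Hhsome : forall j, a (h j) <> None).
      { destruct j. rewrite Hh0; apply Hnx2. rewrite HhS; apply Hnx2. }
      assert (Hhge : forall j, j <= h j).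
      { induction j. lia. rewrite HhS. pose proof (Hnx1 (S (h j))). lia. }
      assert (Hcover : forall j n, n <= h j -> a n <> None -> exists j', h j' = n).
      { induction j; intros n H1 H2.
        - rewrite Hh0 in H1. destruct (Nat.eq_dec n (nx 0)). exists 0; rewrite Hh0; auto.
          exfalso. apply H2. apply (Hnx3 0); lia.
        - destruct (Nat.le_gt_cases n (h j)). apply (IHj n); auto.
          rewrite HhS in H1. destruct (Nat.eq_dec n (nx (S (h j)))). exists (S j); rewrite HhS; auto.
          exfalso. apply H2. apply (Hnx3 (S (h j))); lia. }
      right. exists (fun j => g (h j)), (fun j => a (h j)). repeat split.
      * rewrite Hh0. rewrite (Hconst 0 (nx 0)); eauto.
      * intros j. destruct (Hg2 (h j)) as [[E _]|[_ E]]. exfalso; apply (Hhsome j); auto.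
        rewrite HhS. rewrite (Hconst (S (h j)) (nx (S (h j)))); eauto.
      * intros H. apply Htr in H. destruct H as (n & H1 & H2).
        destruct (Hcover n n (Hhge n)) as (j & Hj). rewrite H1; discriminate.
        subst n. rewrite Hcnt in H2. subst j. exists k. rewrite count_all by auto. auto.
      * intros (n & H1 & H2). rewrite count_all in H2 by auto. subst. apply Htr.
        exists (h k). auto.
Qed.
End A.

Section B.
Variables (St1 St2 : Type).
Variable step1 : St1 -> option L -> St1 -> Prop.
Variable step2 : St2 -> option L -> St2 -> Prop.
Variable R : St1 -> St2 -> Prop.
Hypothesis HB1 : forall b l b', step2 b l b' -> l <> None.
Hypothesis HB : forall a b x b', R a b -> step2 b (Some x) b' ->
  exists n a1 a', epsn step1 n a a1 /\ step1 a1 (Some x) a' /\ R a' b'.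

Lemma B_fin b ls : frun step2 b ls -> forall a, R a b ->
  exists ls', frun step1 a ls' /\ somes ls' = somes ls.
Proof.
  induction 1 as [s|s l s' ls Hs Hr IH]; intros a Ha.
  - exists []; split; auto; constructor.
  - destruct l as [x|]; [|exfalso; eapply HB1; eauto].
    destruct (HB _ _ _ _ Ha Hs) as (n & a1 & a' & H1 & H2 & H3).
    destruct (IH _ H3) as (ls' & ? & E).
    exists (repeat None n ++ Some x :: ls'). split.
    + eapply epsn_frun; eauto. econstructor; eauto.
    + rewrite somes_repeat. simpl; congruence.
Qed.

Lemma B_lang a0 b0 w : R a0 b0 -> lts_lang step2 b0 w -> lts_lang step1 a0 w.
Proof.
  intros H0 [(ls & Hls & Hw)|(bs & xs & Hs0 & Hst & Htr)].
  - destruct (B_fin _ _ Hls _ H0) as (ls' & ? & E). left. exists ls'. split; auto.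
    intros k; rewrite E; auto.
  - assert (Hxs : forall k, xs k <> None) by (intros k; eapply HB1; eauto).
    assert (Hw : forall k, w k = xs k) by (apply all_some_word; auto).
    set (Inv := fun (t : St1 * nat * nat) => let '(a, k, n) := t in
       exists a1 a', epsn step1 n a a1 /\ step1 a1 (xs k) a' /\ R a' (bs (S k))).
    assert (Hinv : forall a k, R a (bs k) -> exists n, Inv (a, k, n)).
    { intros a k Hr. destruct (xs k) as [x|] eqn:E; [|exfalso; eapply Hxs; eauto].
      pose proof (Hst k) as Hk. rewrite E in Hk.
      destruct (HB _ _ _ _ Hr Hk) as (n & a1 & a' & H1 & H2 & H3).
      exists n, a1, a'. rewrite E; auto. }
    set (Spec := fun (t : St1 * nat * nat) (r : option L * (St1 * nat * nat)) => Inv t ->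
       Inv (snd r) /\ step1 (fst (fst t)) (fst r) (fst (fst (snd r))) /\
       match snd t with
       | 0 => fst r = xs (snd (fst t)) /\ snd (fst (snd r)) = S (snd (fst t))
       | S n => fst r = None /\ snd (fst (snd r)) = snd (fst t) /\ snd (snd r) = n
       end).
    assert (Hch : forall t, exists r, Spec t r).
    { intros [[a k] n]. destruct (classic (Inv (a, k, n))) as [Hi|Hi].
      - destruct Hi as (a1 & a' & H1 & H2 & H3). destruct n.
        + inversion H1; subst.
          destruct (Hinv a' (S k) H3) as (n' & Hn').
          exists (xs k, (a', S k, n')). intros _. split; [exact Hn'|]. simpl. auto.
        + inversion H1; subst.
          exists (None, (s', k, n)). intros _. simpl. repeat split; auto.
          exists a1, a'. auto.
      - exists (None, (a, k, n)). intros Hc; exfalso; apply Hi; exact Hc. }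
    set (F := fun t => proj1_sig (constructive_indefinite_description _ (Hch t))).
    assert (HF : forall t, Spec t (F t)).
    { intros t. exact (proj2_sig (constructive_indefinite_description _ (Hch t))). }
    clearbody F.
    destruct (Hinv a0 0) as (n0 & Hn0). rewrite Hs0; auto.
    set (st := fix st N := match N with 0 => (a0, 0, n0) | S N => snd (F (st N)) end).
    assert (Hst0 : st 0 = (a0, 0, n0)) by reflexivity.
    assert (HstS : forall N, st (S N) = snd (F (st N))) by reflexivity.
    clearbody st.
    set (lab := fun N => fst (F (st N))).
    assert (HI : forall N, Inv (st N)).
    { induction N. rewrite Hst0; auto. rewrite HstS. apply HF; auto. }
    assert (HC : forall N, count_some lab N = snd (fst (st N))).
    { induction N. rewrite Hst0; auto. simpl. rewrite IHN, HstS.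
      destruct (HF _ (HI N)) as (_ & _ & H). unfold lab.
      destruct (st N) as [[a k] n]. simpl in *. destruct n.
      - destruct H as [-> ->]. destruct (xs k) eqn:E. lia. exfalso; eapply Hxs; eauto.
      - destruct H as (-> & -> & _). lia. }
    assert (Hlab : forall N x, lab N = Some x -> snd (st N) = 0 /\ x = match xs (snd (fst (st N))) with Some y => y | None => x end).
    { intros N x E. destruct (HF _ (HI N)) as (_ & _ & H). unfold lab in E.
      destruct (st N) as [[a k] n]. simpl in *. destruct n.
      - destruct H as [H _]. rewrite <- H, E. auto.
      - destruct H as [H _]. congruence. }
    assert (Hstep : forall N, match snd (st N) with
       | 0 => lab N = xs (snd (fst (st N))) /\ snd (fst (st (S N))) = S (snd (fst (st N)))
       | S n => lab N = None /\ snd (fst (st (S N))) = snd (fst (st N)) /\ snd (st (S N)) = n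
       end).
    { intros N. rewrite HstS. unfold lab. exact (proj2 (proj2 (HF _ (HI N)))). }
    assert (Hreach : forall j, exists N, snd (fst (st N)) = j).
    { induction j. exists 0. rewrite Hst0; auto.
      destruct IHj as (N & HN).
      assert (Haux : forall d N, snd (st N) <= d -> snd (fst (st N)) = j -> exists M, snd (fst (st M)) = S j).
      { induction d; intros N' H1 H2; pose proof (Hstep N') as Hs; revert Hs;
          destruct (snd (st N')) as [|n'] eqn:E; intros Hs.
        - exists (S N'). destruct Hs as [_ ->]. congruence.
        - lia.
        - exists (S N'). destruct Hs as [_ ->]. congruence.
        - destruct Hs as (_ & H3 & H4). apply (IHd (S N')); [rewrite H4; lia | rewrite H3; auto]. }
      eapply (Haux (snd (st N)) N); auto. }
    right. exists (fun N => fst (fst (st N))), lab. repeat split.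
    + rewrite Hst0; auto.
    + intros N. rewrite HstS. apply HF; auto.
    + intros H. rewrite Hw in H.
      assert (Hex : exists N, lab N = Some x /\ snd (fst (st N)) = k).
      { destruct (Hreach k) as (N0 & HN0).
        assert (Haux : forall d N, snd (st N) <= d -> snd (fst (st N)) = k -> exists N, lab N = Some x /\ snd (fst (st N)) = k).
        { induction d; intros N' H1 H2; pose proof (Hstep N') as Hs; revert Hs;
            destruct (snd (st N')) as [|n'] eqn:E; intros Hs.
          - exists N'. split; auto. destruct Hs as [-> _]. rewrite H2; auto.
          - lia.
          - exists N'. split; auto. destruct Hs as [-> _]. rewrite H2; auto.
          - destruct Hs as (_ & H3 & H4). apply (IHd (S N')); [rewrite H4; lia | rewrite H3; auto]. }
        eapply (Haux _ N0); eauto. }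
      destruct Hex as (N' & E1 & E2). exists N'. rewrite HC. auto.
    + intros (N & H1 & H2). rewrite Hw. rewrite HC in H2. destruct (Hlab _ _ H1) as [_ E].
      rewrite H2 in E. destruct (xs k) eqn:Exs. subst; auto. exfalso; eapply Hxs; eauto.
Qed.
End B.
End Generic.
Arguments epsn {L St}.



Section Spec.
Variables P M : Type.
Notation gt := (gtype P M).
Notation br := (list (P * M * gt)).
Definition env := nat -> option gt.
Definition rm (e : env) r : env := fun v => if Nat.eqb v r then None else e v.
Definition upd (e : env) r (T : gt) : env := fun v => if Nat.eqb v r then Some T else e v.

Section GInd.
Variable Pg : gt -> Prop.
Variable Pl : br -> Prop.
Hypothesis h_end : Pg GEnd.
Hypothesis h_var : forall n, Pg (GVar n).
Hypothesis h_rec : forall n B, Pg B -> Pg (GRec n B).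
Hypothesis h_choice : forall p bs, Pl bs -> Pg (GChoice p bs).
Hypothesis h_nil : Pl [].
Hypothesis h_cons : forall q m X bs, Pg X -> Pl bs -> Pl ((q, m, X) :: bs).
Fixpoint gind (G : gt) : Pg G :=
  match G with
  | GEnd => h_end
  | GVar n => h_var n
  | GRec n B => h_rec n B (gind B)
  | GChoice p bs => h_choice p bs
      ((fix li (bs : br) : Pl bs :=
         match bs with
         | [] => h_nil
         | (q, m, X) :: bs' => h_cons q m X bs' (gind X) (li bs')
         end) bs)
  end.
End GInd.

Fixpoint substs r (N : gt) (bs : br) : br :=
  match bs with
  | [] => []
  | (q, m, X) :: bs' => (q, m, subst r N X) :: substs r N bs'
  end.
Fixpoint fvs (bs : br) : list nat :=
  match bs with
  | [] => []
  | (_, _, X) :: bs' => fv X ++ fvs bs'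
  end.
Fixpoint bvs (bs : br) : list nat :=
  match bs with
  | [] => []
  | (_, _, X) :: bs' => bv X ++ bvs bs'
  end.

Lemma subst_choice r N p bs : subst r N (GChoice p bs) = GChoice p (substs r N bs).
Proof. simpl. f_equal. induction bs as [|[[q m] X] bs IH]; simpl; congruence. Qed.
Lemma fv_choice p (bs : br) : fv (GChoice p bs) = fvs bs.
Proof. simpl. induction bs as [|[[q m] X] bs IH]; simpl; congruence. Qed.
Lemma bv_choice p (bs : br) : bv (GChoice p bs) = bvs bs.
Proof. simpl. induction bs as [|[[q m] X] bs IH]; simpl; congruence. Qed.

Lemma fvs_in (bs : br) q m X v : In (q, m, X) bs -> In v (fv X) -> In v (fvs bs).
Proof.
  induction bs as [|[[q' m'] Y] bs IH]; simpl; [tauto|].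
  intros [E|H] Hv; apply in_or_app; [inversion E; subst; auto| right; auto].
Qed.
Lemma bvs_in (bs : br) q m X v : In (q, m, X) bs -> In v (bv X) -> In v (bvs bs).
Proof.
  induction bs as [|[[q' m'] Y] bs IH]; simpl; [tauto|].
  intros [E|H] Hv; apply in_or_app; [inversion E; subst; auto| right; auto].
Qed.
Lemma bvs_nodup (bs : br) q m X : NoDup (bvs bs) -> In (q, m, X) bs -> NoDup (bv X).
Proof.
  induction bs as [|[[q' m'] Y] bs IH]; simpl; [tauto|].
  intros Hn [E|H].
  - inversion E; subst. eapply NoDup_app_remove_r; eauto.
  - apply IH; auto. eapply NoDup_app_remove_l; eauto.
Qed.
Lemma nodup_disj (l1 l2 : list nat) u : NoDup (l1 ++ l2) -> In u l1 -> In u l2 -> False.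
Proof.
  induction l1; simpl; [tauto|]. intros Hn [E|H1] H2; inversion Hn as [|a0 l0 Hna Hnd]; subst.
  - apply Hna. apply in_or_app; auto.
  - eauto.
Qed.

Lemma bvs_uniq (bs : br) q m X q' m' Y v : NoDup (bvs bs) -> In (q, m, X) bs -> In (q', m', Y) bs ->
  In v (bv X) -> In v (bv Y) -> X = Y.
Proof.
  induction bs as [|[[q0 m0] Z] bs IH]; simpl; [tauto|].
  intros Hn H1 H2 Hv1 Hv2.
  assert (Hd : forall u, In u (bv Z) -> In u (bvs bs) -> False).
  { intros u A B. eapply nodup_disj; eauto. }
  destruct H1 as [E1|H1], H2 as [E2|H2].
  - inversion E1; inversion E2; subst; auto.
  - inversion E1; subst. exfalso. eapply Hd; eauto. eapply bvs_in; eauto.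
  - inversion E2; subst. exfalso. eapply Hd; eauto. eapply bvs_in; eauto.
  - eapply IH; eauto. eapply NoDup_app_remove_l; eauto.
Qed.

Lemma subterm_trans (X Y Z : gt) : subterm X Y -> subterm Y Z -> subterm X Z.
Proof. intros H1 H2. induction H2; auto. constructor; auto. econstructor; eauto. Qed.

Lemma subterm_bv r (B X : gt) : subterm (GRec r B) X -> In r (bv X).
Proof.
  intros H. remember (GRec r B) as Y. induction H; subst.
  - simpl; auto.
  - simpl; auto.
  - rewrite bv_choice. eapply bvs_in; eauto.
Qed.

Lemma rec_unique r (B1 B2 X : gt) : NoDup (bv X) -> subterm (GRec r B1) X -> subterm (GRec r B2) X -> B1 = B2.
Proof.
  intros Hn H1. revert B2. remember (GRec r B1) as Y. induction H1; intros B2 H2; subst.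
  - inversion H2 as [|G0 rr B0 Hs|]; subst; auto.
    exfalso. apply subterm_bv in Hs. simpl in Hn. inversion Hn; auto.
  - inversion H2 as [|G0 rr B0 Hs|]; subst.
    + exfalso. apply subterm_bv in H1. simpl in Hn. inversion Hn; auto.
    + apply IHsubterm; auto. simpl in Hn. inversion Hn; auto.
  - inversion H2 as [| |G0 pp bs0 qq mm G0' Hin Hs]; subst. rewrite bv_choice in Hn.
    assert (G' = G0').
    { eapply bvs_uniq; eauto; eapply subterm_bv; eauto. }
    subst. apply IHsubterm; auto. eapply bvs_nodup; eauto.
Qed.

Lemma catr_lift (X Y : gt) s l t : subterm X Y -> catr X s l t -> catr Y s l t.
Proof. intros H; induction H; intros; auto. constructor; auto. eapply catr_choicein; eauto. Qed.

Lemma catr_inv (X : gt) s l t : catr X s l t ->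
  (exists r B, s = GVar r /\ l = None /\ t = GRec r B /\ subterm (GRec r B) X) \/
  (exists r B, s = GRec r B /\ l = None /\ t = B) \/
  (exists p bs q m, s = GChoice p bs /\ l = Some (p, q, m) /\ In (q, m, t) bs).
Proof.
  induction 1.
  - destruct IHcatr as [(r0 & B0 & H1 & H2 & H3 & H4)|Hx]; auto.
    left. exists r0, B0. repeat split; auto. constructor; auto.
  - left. exists r, B. repeat split; auto. constructor.
  - right; left. eauto.
  - right; right. exists p, bs, q, m. auto.
  - destruct IHcatr as [(r0 & B0 & H1 & H2 & H3 & H4)|H']; auto.
    left. exists r0, B0. repeat split; auto. econstructor; eauto.
Qed.

Inductive Match : env -> gt -> gt -> Prop :=
| m_end e : Match e GEnd GEnd
| m_var_some e r N : e r = Some N -> Match e (GVar r) N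
| m_var_none e r : e r = None -> Match e (GVar r) (GVar r)
| m_rec e r B B' : Match (rm e r) B B' -> Match e (GRec r B) (GRec r B')
| m_choice e p bs bs' : MatchL e bs bs' -> Match e (GChoice p bs) (GChoice p bs')
with MatchL : env -> br -> br -> Prop :=
| ml_nil e : MatchL e [] []
| ml_cons e q m X X' bs bs' : Match e X X' -> MatchL e bs bs' -> MatchL e ((q, m, X) :: bs) ((q, m, X') :: bs').

Scheme Match_mut := Induction for Match Sort Prop
with MatchL_mut := Induction for MatchL Sort Prop.

Lemma Match_ext e X Y : Match e X Y -> forall e', (forall v, e v = e' v) -> Match e' X Y.
Proof.
  apply (Match_mut (fun e X Y _ => forall e', (forall v, e v = e' v) -> Match e' X Y)
                   (fun e bs bs' _ => forall e', (forall v, e v = e' v) -> MatchL e' bs bs')); intros.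
  - constructor.
  - constructor. congruence.
  - apply m_var_none. congruence.
  - constructor. apply H. intros v. unfold rm. rewrite H0. auto.
  - constructor. auto.
  - constructor.
  - constructor; auto.
Qed.

Lemma Match_refl (X : gt) : forall e, (forall v, e v = None) -> Match e X X.
Proof.
  apply (gind (fun X => forall e, (forall v, e v = None) -> Match e X X)
              (fun bs => forall e, (forall v, e v = None) -> MatchL e bs bs)); intros.
  - constructor.
  - apply m_var_none; auto.
  - constructor. apply H. intros v. unfold rm. rewrite H0. destruct (v =? n); auto.
  - constructor; auto.
  - constructor.
  - constructor; auto.
Qed.

Lemma subst_notfree r (T X : gt) : ~ In r (fv X) -> subst r T X = X.
Proof.
  revert X.
  apply (gind (fun X => ~ In r (fv X) -> subst r T X = X)
              (fun bs => ~ In r (fvs bs) -> substs r T bs = bs)); intros.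
  - reflexivity.
  - simpl. simpl in H. destruct (Nat.eqb_spec n r); subst; tauto.
  - simpl. destruct (Nat.eqb_spec n r); auto. f_equal. apply H. intros Hin.
    apply H0. simpl. apply filter_In. split; auto. apply Bool.negb_true_iff. apply Nat.eqb_neq. auto.
  - rewrite subst_choice. f_equal. apply H. rewrite <- (fv_choice p). auto.
  - reflexivity.
  - simpl. simpl in H1. rewrite H, H0; auto; intros Hin; apply H1; apply in_or_app; auto.
Qed.

Lemma Match_subst r (T : gt) e0 B B' : Match e0 B B' -> e0 r = None ->
  (forall v N, e0 v = Some N -> ~ In r (fv N)) -> Match (upd e0 r T) B (subst r T B').
Proof.
  intros H. revert H.
  apply (Match_mut (fun e0 B B' _ => e0 r = None ->
     (forall v N, e0 v = Some N -> ~ In r (fv N)) -> Match (upd e0 r T) B (subst r T B'))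
   (fun e0 bs bs' _ => e0 r = None ->
     (forall v N, e0 v = Some N -> ~ In r (fv N)) -> MatchL (upd e0 r T) bs (substs r T bs'))); intros.
  - constructor.
  - rewrite subst_notfree by eauto. constructor. unfold upd.
    destruct (Nat.eqb_spec r0 r); subst; congruence.
  - simpl. unfold upd. destruct (Nat.eqb_spec r0 r).
    + subst. constructor. unfold upd. rewrite Nat.eqb_refl. auto.
    + apply m_var_none. unfold upd. destruct (Nat.eqb_spec r0 r); congruence.
  - simpl. destruct (Nat.eqb_spec r0 r).
    + subst. constructor. eapply Match_ext; eauto. intros v. unfold rm, upd.
      destruct (v =? r); auto.
    + constructor. eapply Match_ext. apply H.
      * unfold rm. rewrite (proj2 (Nat.eqb_neq r r0)); auto.
      * intros v N. unfold rm. destruct (v =? r0); [discriminate|]. eauto.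
      * intros v. unfold rm, upd. destruct (Nat.eqb_spec v r0), (Nat.eqb_spec v r); subst; auto.
        congruence.
  - rewrite subst_choice. constructor. auto.
  - constructor.
  - simpl. constructor; auto.
Qed.

Lemma Match_fv e X Y : Match e X Y -> forall s, In s (fv Y) ->
  (In s (fv X) /\ e s = None) \/ (exists v N, e v = Some N /\ In s (fv N)).
Proof.
  intros H. revert H.
  apply (Match_mut (fun e X Y _ => forall s, In s (fv Y) ->
     (In s (fv X) /\ e s = None) \/ (exists v N, e v = Some N /\ In s (fv N)))
   (fun e bs bs' _ => forall s, In s (fvs bs') ->
     (In s (fvs bs) /\ e s = None) \/ (exists v N, e v = Some N /\ In s (fv N)))); intros.
  - simpl in H; tauto.
  - right. eauto.
  - left. simpl in *. split; auto. destruct H as [<-|[]]; auto.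
  - simpl in H0. apply filter_In in H0. destruct H0 as [H1 H2].
    apply Bool.negb_true_iff, Nat.eqb_neq in H2.
    destruct (H s H1) as [[A B0]|(v & N & A & B0)].
    + left. split. simpl. apply filter_In. split; auto. apply Bool.negb_true_iff, Nat.eqb_neq; auto.
      unfold rm in B0. rewrite (proj2 (Nat.eqb_neq s r)) in B0; auto.
    + right. exists v, N. unfold rm in A. destruct (v =? r); [discriminate|]. auto.
  - rewrite fv_choice in *. auto.
  - simpl in H; tauto.
  - simpl in H1. apply in_app_or in H1. destruct H1 as [H1|H1].
    + destruct (H s H1) as [[A B0]|C]; auto. left. simpl. split; auto. apply in_or_app; auto.
    + destruct (H0 s H1) as [[A B0]|C]; auto. left. simpl. split; auto. apply in_or_app; auto.
Qed.

Lemma MatchL_in e bs bs' q m X : MatchL e bs bs' -> In (q, m, X) bs -> exists X', In (q, m, X') bs' /\ Match e X X'.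
Proof.
  induction 1; simpl; [tauto|]. intros [E|H1].
  - inversion E; subst. exists X'. auto.
  - destruct (IHMatchL H1) as (Y & ? & ?). exists Y; auto.
Qed.
Lemma MatchL_in' e bs bs' q m X' : MatchL e bs bs' -> In (q, m, X') bs' -> exists X, In (q, m, X) bs /\ Match e X X'.
Proof.
  induction 1; simpl; [tauto|]. intros [E|H1].
  - inversion E; subst. exists X. auto.
  - destruct (IHMatchL H1) as (Y & ? & ?). exists Y; auto.
Qed.

Section WithG.
Variable G : gt.

Inductive Good : env -> gt -> Prop :=
| good_intro e c :
   subterm c G ->
   (forall v, In v (fv c) -> In v (bv G) -> e v <> None) ->
   (forall v N, e v = Some N -> forall s, In s (bv G) -> ~ In s (fv N)) ->
   (forall v N, e v = Some N -> exists e' B, subterm (GRec v B) G /\ Good e' (GRec v B) /\ Match e' (GRec v B) N) ->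
   Good e c.

Definition Rel (c T : gt) := exists e T0, Good e c /\ Match e c T0 /\
  (forall x T', sem_CR T x T' <-> sem_CR T0 x T').

Lemma L_choice e p bs q m X : Good e (GChoice p bs) -> In (q, m, X) bs ->
  Good e X /\ cat_step G (GChoice p bs) (Some (p, q, m)) X.
Proof.
  intros Hg Hin. inversion Hg as [e0 c0 H1 H2 H3 H4]; subst.
  assert (HX : subterm X G).
  { eapply subterm_trans; [|eauto]. econstructor; [eauto|constructor]. }
  split.
  - constructor; auto. intros v Hv. apply H2. rewrite fv_choice. eapply fvs_in; eauto.
  - split; [auto|split; auto]. eapply catr_lift; [exact H1|]. apply catr_choice; auto.
Qed.

Lemma L_var e v N : Good e (GVar v) -> e v = Some N ->
  exists e' B, Good e' (GRec v B) /\ Match e' (GRec v B) N /\ cat_step G (GVar v) None (GRec v B).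
Proof.
  intros Hg He. inversion Hg as [e0 c0 H1 H2 H3 H4]; subst.
  destruct (H4 _ _ He) as (e' & B & Hs & Hg' & Hm). exists e', B.
  split; [exact Hg'|]. split; [exact Hm|]. split; [exact H1|]. split; [exact Hs|]. eapply catr_lift; [exact Hs|]. apply catr_back.
Qed.

Lemma L_rec e r B T0 : Good e (GRec r B) -> Match e (GRec r B) T0 ->
  exists B', T0 = GRec r B' /\ Good (upd e r T0) B /\ Match (upd e r T0) B (subst r T0 B') /\
    cat_step G (GRec r B) None B.
Proof.
  intros Hg Hm. inversion Hm as [| | |e0 r0 B0 B' Hm' | ]; subst. exists B'.
  inversion Hg as [e0 c0 H1 H2 H3 H4]; subst.
  assert (Hr : In r (bv G)) by (eapply subterm_bv; eauto).
  assert (HsB : subterm B G).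
  { eapply subterm_trans; [|eauto]. constructor; constructor. }
  split; auto. split; [|split].
  - constructor; auto.
    + intros v Hv Hb. unfold upd. destruct (Nat.eqb_spec v r); [discriminate|].
      apply H2; auto. simpl. apply filter_In. split; auto.
      apply Bool.negb_true_iff, Nat.eqb_neq; auto.
    + intros v N. unfold upd. destruct (Nat.eqb_spec v r).
      * intros E; inversion E; subst. intros s Hs Hin.
        destruct (Match_fv _ _ _ Hm _ Hin) as [[A B1]|(w & N' & A & B1)].
        -- eapply H2; eauto.
        -- eapply H3; eauto.
      * eauto.
    + intros v N. unfold upd. destruct (Nat.eqb_spec v r).
      * intros E; inversion E; subst. exists e, B. auto.
      * eauto.
  - eapply Match_ext. apply Match_subst with (e0 := rm e r); eauto.
    + unfold rm; rewrite Nat.eqb_refl; auto.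
    + intros v N. unfold rm. destruct (v =? r); [discriminate|]. intros E. eapply H3; eauto.
    + intros v. unfold upd, rm. destruct (v =? r); auto.
  - split; [auto|split; auto]. eapply catr_lift; [exact H1|]. apply catr_unfold.
Qed.

Lemma S1 (HN : NoDup (bv G)) c T l c' : Rel c T -> cat_step G c l c' ->
  (l = None /\ Rel c' T) \/ (exists x T', l = Some x /\ sem_CR T x T' /\ Rel c' T').
Proof.
  intros (e & T0 & Hg & Hm & Hsem) (Hs1 & Hs2 & Hc).
  destruct (catr_inv _ _ _ _ Hc) as [(r & B & -> & -> & -> & Hsub)|[(r & B & -> & -> & ->)|(p & bs & q & m & -> & -> & Hin)]].
  - left. split; auto. inversion Hm as [|e0 r0 N HN'|e0 r0 HN'| |]; subst.
    + destruct (L_var _ _ _ Hg HN') as (e' & B0 & Hg' & Hm' & _).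
      assert (B0 = B).
      { inversion Hg' as [e1 c1 Hsub' _ _ _]; subst. eapply rec_unique; eauto. }
      subst. exists e', T0. auto.
    + exfalso. inversion Hg as [e1 c1 H1 H2 H3 H4]; subst. apply (H2 r); simpl; auto.
      eapply subterm_bv; eauto.
  - left. split; auto. destruct (L_rec _ _ _ _ Hg Hm) as (B' & -> & Hg' & Hm' & _).
    exists (upd e r (GRec r B')), (subst r (GRec r B') B'). split; auto. split; auto.
    intros x T'. rewrite Hsem. split; intros H.
    + inversion H; subst; auto.
    + constructor; auto.
  - right. inversion Hm as [| | | |e0 p0 bs0 bs' HmL]; subst.
    destruct (MatchL_in _ _ _ _ _ _ HmL Hin) as (X' & Hin' & HmX).
    exists (p, q, m), X'. split; auto. split.
    + apply Hsem. constructor; auto.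
    + destruct (L_choice _ _ _ _ _ _ Hg Hin) as [HgX _]. exists e, X'. split; auto. split; auto. tauto.
Qed.

Lemma S2core T0 x T' : sem_CR T0 x T' -> forall c e, Good e c -> Match e c T0 ->
  exists n c1 c', epsn (cat_step G) n c c1 /\ cat_step G c1 (Some x) c' /\ Rel c' T'.
Proof.
  induction 1 as [p bs q m Gj Hin | r B a G' Hsem IH]; intros c e Hg Hm.
  - inversion Hm as [|e0 v N Hv| | |e0 p0 bs0 bs' HmL]; subst.
    + destruct (L_var _ _ _ Hg Hv) as (e' & B & _ & Hm' & _). inversion Hm'.
    + destruct (MatchL_in' _ _ _ _ _ _ HmL Hin) as (X & HinX & HmX).
      destruct (L_choice _ _ _ _ _ _ Hg HinX) as [HgX Hst].
      exists 0, (GChoice p bs0), X. split; [constructor|]. split; auto.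
      exists e, Gj. split; auto. split; auto. tauto.
  - inversion Hm as [|e0 v N Hv| |e0 r0 B0 B' HmB|]; subst.
    + destruct (L_var _ _ _ Hg Hv) as (e' & B0 & Hg' & Hm' & Hst).
      inversion Hm'; subst.
      destruct (L_rec _ _ _ _ Hg' Hm') as (B'' & E & Hg'' & Hm'' & Hst').
      inversion E; subst.
      destruct (IH _ _ Hg'' Hm'') as (n & c1 & c' & K1 & K2 & K3).
      exists (S (S n)), c1, c'. split; auto. econstructor; eauto. econstructor; eauto.
    + destruct (L_rec _ _ _ _ Hg Hm) as (B'' & E & Hg'' & Hm'' & Hst').
      inversion E; subst.
      destruct (IH _ _ Hg'' Hm'') as (n & c1 & c' & K1 & K2 & K3).
      exists (S n), c1, c'. split; auto. econstructor; eauto.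
Qed.

End WithG.
End Spec.

Theorem proposition5p2 (P M : Type) (G : gtype P M) (HG : wf_gtype G) :
  forall w : word (interaction P M),
    lts_lang (@cat_step P M G) G w <-> lts_lang (@sem_CR_step P M) G w.
Proof.
  intros w.
  destruct HG as (_ & HN & Hfb).
  assert (H0 : @Rel P M G G G).
  { exists (fun _ => None), G. split; [|split].
    - constructor.
      + constructor.
      + intros v Hv Hb. exfalso. eapply Hfb; eauto.
      + intros v N E; discriminate.
      + intros v N E; discriminate.
    - apply Match_refl; auto.
    - tauto. }
  split.
  - intros Hw. eapply A_lang; [|exact H0|exact Hw].
    intros a b l a' Hr Hs. destruct (@S1 P M G HN _ _ _ _ Hr Hs) as [H|(x & T' & -> & H1 & H2)]; auto.
    right. exists x, T'. auto.
  - intros Hw. eapply B_lang; [| |exact H0|exact Hw].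
    + intros b l b' H. destruct l; simpl in H; [discriminate|contradiction].
    + intros a b x b' Hr Hs. simpl in Hs. destruct Hr as (e & T0 & Hg & Hm & Hsem).
      apply Hsem in Hs. eapply S2core; eauto.
Qed.
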